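(* Consider a reasonable rank-one construction with symbolic model $\Omega$. Fix $\varepsilon>0$ and an integer $\ell\ge1$. Then there exists $N(\varepsilon,\ell)$ such that for every integer $N\ge N(\varepsilon,\ell)$ and every $\omega\in\Omega$, the word $W=\omega_1\omega_2\cdots\omega_N$ can be written as $W=ABC$ with (possibly empty) words $A,B,C$ such that $B=1^s$ for some $s\ge0$, and there is a family of occurrences, at pairwise disjoint positions, of building blocks $B_n$ with $n\ge\ell$ inside $A$ and inside $C$, such that the total number of positions of $A$ and of $C$ not covered by these occurrences is at most $\varepsilon N$.
   Context: Rank-one parameters: integers $p_n\ge2$, integers $s_{n,i}\ge0$ ($0\le i\le p_n-1$), $h_1=1$, $h_{n+1}=p_nh_n+\sum_is_{n,i}$, $\sum_n\frac1{h_{n+1}}\sum_is_{n,i}<\infty$. Reasonable: $t_n:=\max_{0\le i\le p_n-1}s_{n,i}=o(h_n)$. Building blocks: $B_1=0$, $B_{n+1}=B_n1^{s_{n,0}}B_n1^{s_{n,1}}\cdots B_n1^{s_{n,p_n-1}}$ (words over $\{0,1\}$, $|B_n|=h_n$). $\Omega\subset\{0,1\}^{\mathbb Z}$ is the set of sequences all of whose finite subwords are subwords of some $B_m$. *)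

(* Defs.v *)
(* words are lists of bool (false = 0, true = 1), reals from Stdlib. *)
From Stdlib Require Import Reals ZArith Arith List.
Import ListNotations.
Open Scope R_scope.

(* Rank-one parameters: p n = p_n, s n i = s_{n,i} (meaningful for n >= 1, i < p n). *)

Definition ssum (p : nat -> nat) (s : nat -> nat -> nat) (n : nat) : nat :=
  fold_right Nat.add 0%nat (map (s n) (seq 0 (p n))).

Definition tmax (p : nat -> nat) (s : nat -> nat -> nat) (n : nat) : nat :=
  fold_right Nat.max 0%nat (map (s n) (seq 0 (p n))).

(* h 1 = 1, h (n+1) = p_n h_n + sum_i s_{n,i} for n >= 1; h 0 is junk (= 1). *)
Fixpoint h (p : nat -> nat) (s : nat -> nat -> nat) (n : nat) : nat :=
  match n with
  | O => 1%nat
  | S m => match m with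
           | O => 1%nat
           | _ => (p m * h p s m + ssum p s m)%nat
           end
  end.

(* Building blocks: B 1 = 0, B (n+1) = B_n 1^{s_{n,0}} ... B_n 1^{s_{n,p_n-1}};
   B 0 is junk (= [0]). *)
Fixpoint B (p : nat -> nat) (s : nat -> nat -> nat) (n : nat) : list bool :=
  match n with
  | O => [false]
  | S m => match m with
           | O => [false]
           | _ => concat (map (fun i => B p s m ++ repeat true (s m i)) (seq 0 (p m)))
           end
  end.

Definition reasonable (p : nat -> nat) (s : nat -> nat -> nat) : Prop :=
  forall eps : R, 0 < eps ->
    exists n0 : nat, forall n : nat, (n0 <= n)%nat ->
      INR (tmax p s n) <= eps * INR (h p s n).

Definition subword (u w : list bool) : Prop :=
  exists x y : list bool, w = x ++ u ++ y.

Definition window (omega : Z -> bool) (a : Z) (len : nat) : list bool :=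
  map (fun k => omega (a + Z.of_nat k)%Z) (seq 0 len).

Definition InOmega (p : nat -> nat) (s : nat -> nat -> nat) (omega : Z -> bool) : Prop :=
  forall (a : Z) (len : nat),
    exists m : nat, (1 <= m)%nat /\ subword (window omega a len) (B p s m).

(* An occurrence (pos, n) in w: the factor of w starting at position pos
   (0-based) of length |B_n| equals B_n. *)
Definition occurrence (p : nat -> nat) (s : nat -> nat -> nat)
    (w : list bool) (o : nat * nat) : Prop :=
  (fst o + length (B p s (snd o)) <= length w)%nat /\
  firstn (length (B p s (snd o))) (skipn (fst o) w) = B p s (snd o).

Definition coversb (p : nat -> nat) (s : nat -> nat -> nat)
    (o : nat * nat) (k : nat) : bool :=
  Nat.leb (fst o) k && Nat.ltb k (fst o + length (B p s (snd o))).

Definition good_family (p : nat -> nat) (s : nat -> nat -> nat) (l : nat)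
    (w : list bool) (L : list (nat * nat)) : Prop :=
  (forall o, In o L -> (l <= snd o)%nat /\ occurrence p s w o) /\
  ForallOrdPairs (fun o1 o2 => forall k,
      ~ (coversb p s o1 k = true /\ coversb p s o2 k = true)) L.

Definition uncovered (p : nat -> nat) (s : nat -> nat -> nat)
    (w : list bool) (L : list (nat * nat)) : nat :=
  length (filter (fun k => negb (existsb (fun o => coversb p s o k) L))
                 (seq 0 (length w))).

(* Main.v *)
Require Import Defs.
From Stdlib Require Import Reals ZArith Arith List Lia Lra.
Import ListNotations.
Open Scope nat_scope.


Definition Cst p s l (w : list bool) (c : nat) : Prop :=
  exists L, good_family p s l w L /\ uncovered p s w L <= c.

Lemma filter_true_len (f : nat -> bool) (xs : list nat) :
  (forall x, In x xs -> f x = true) -> length (filter f xs) = length xs.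
Proof. induction xs as [|a xs IH]; intros Hf; simpl; auto.
  rewrite (Hf a) by (left; auto). simpl. rewrite IH; auto. intros; apply Hf; right; auto. Qed.

Lemma filter_false_len (f : nat -> bool) (xs : list nat) :
  (forall x, In x xs -> f x = false) -> length (filter f xs) = 0.
Proof. induction xs as [|a xs IH]; intros Hf; simpl; auto.
  rewrite (Hf a) by (left; auto). apply IH; intros; apply Hf; right; auto. Qed.

Lemma filter_ext_len (f g : nat -> bool) (xs : list nat) :
  (forall x, In x xs -> f x = g x) -> length (filter f xs) = length (filter g xs).
Proof. induction xs as [|a xs IH]; intros Hf; simpl; auto.
  rewrite (Hf a) by (left; auto). destruct (g a); simpl; rewrite IH; auto;
  intros; apply Hf; right; auto. Qed.

Lemma filter_map_len (f : nat -> bool) (g : nat -> nat) (xs : list nat) :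
  length (filter f (map g xs)) = length (filter (fun x => f (g x)) xs).
Proof. induction xs as [|a xs IH]; simpl; auto. destruct (f (g a)); simpl; auto. Qed.

Lemma seq_shift_add (n a len : nat) : seq (n + a) len = map (Nat.add n) (seq a len).
Proof. revert a; induction len as [|len IH]; intros a; simpl; auto.
  f_equal. rewrite <- IH. f_equal. lia. Qed.

Lemma Cst_triv p s l w : Cst p s l w (length w).
Proof. exists []. split. split. intros o []. constructor.
  unfold uncovered. rewrite filter_true_len; [rewrite length_seq; lia|].
  intros; reflexivity. Qed.

Lemma Cst_mono p s l w c c' : c <= c' -> Cst p s l w c -> Cst p s l w c'.
Proof. intros Hc [L [HL Hu]]. exists L; split; auto; lia. Qed.

Lemma Cst_B p s l k : l <= k -> Cst p s l (B p s k) 0.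
Proof. intros Hk. exists [(0, k)]. split. split.
  - intros o [<-|[]]. simpl. split; auto. unfold occurrence; simpl. split; [lia|].
    apply firstn_all.
  - constructor. constructor. constructor.
  - unfold uncovered. rewrite filter_false_len; auto.
    intros x Hx. apply in_seq in Hx. unfold coversb; simpl.
    replace (x <? length (B p s k)) with true. reflexivity.
    symmetry; apply Nat.ltb_lt; lia. Qed.

Lemma existsb_map' {A B} (f : B -> bool) (g : A -> B) l :
  existsb f (map g l) = existsb (fun x => f (g x)) l.
Proof. induction l; simpl; auto. rewrite IHl; auto. Qed.

Lemma existsb_ext' {A} (f g : A -> bool) l :
  (forall x, In x l -> f x = g x) -> existsb f l = existsb g l.
Proof. induction l; simpl; intros H; auto. rewrite H, IHl; auto. Qed.

Definition shiftL (n : nat) (L : list (nat * nat)) :=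
  map (fun o => (n + fst o, snd o)) L.

Lemma cov_lt p s w o k : occurrence p s w o -> coversb p s o k = true -> k < length w.
Proof. unfold occurrence, coversb. intros [H1 _] H.
  apply Bool.andb_true_iff in H as [_ H]. apply Nat.ltb_lt in H. lia. Qed.

Lemma cov_shift_lt p s n o k : k < n -> coversb p s (n + fst o, snd o) k = false.
Proof. intros Hk. unfold coversb; simpl.
  replace (n + fst o <=? k) with false; auto. symmetry; apply Nat.leb_gt; lia. Qed.

Lemma cov_shift p s n o j : coversb p s (n + fst o, snd o) (n + j) = coversb p s o j.
Proof. unfold coversb; simpl.
  destruct (fst o <=? j) eqn:E1; destruct (n + fst o <=? n + j) eqn:E2;
  try (apply Nat.leb_le in E1 || apply Nat.leb_gt in E1);
  try (apply Nat.leb_le in E2 || apply Nat.leb_gt in E2); try lia; simpl; auto.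
  destruct (j <? fst o + length (B p s (snd o))) eqn:E3;
  destruct (n + j <? n + fst o + length (B p s (snd o))) eqn:E4;
  try (apply Nat.ltb_lt in E3 || apply Nat.ltb_ge in E3);
  try (apply Nat.ltb_lt in E4 || apply Nat.ltb_ge in E4); try lia; auto. Qed.

Lemma skipn_app_len {A} (u v : list A) a : skipn (length u + a) (u ++ v) = skipn a v.
Proof. induction u; simpl; auto. Qed.

Lemma occ_app_l p s u v o : occurrence p s u o -> occurrence p s (u ++ v) o.
Proof. unfold occurrence. intros [H1 H2]. rewrite length_app. split; [lia|].
  rewrite skipn_app. replace (fst o - length u) with 0 by lia. simpl.
  rewrite firstn_app. rewrite length_skipn.
  replace (length (B p s (snd o)) - (length u - fst o)) with 0 by lia.
  simpl. rewrite app_nil_r. auto. Qed.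

Lemma occ_app_r p s u v o : occurrence p s v o ->
  occurrence p s (u ++ v) (length u + fst o, snd o).
Proof. unfold occurrence. simpl. intros [H1 H2]. rewrite length_app. split; [lia|].
  rewrite skipn_app_len. auto. Qed.

Lemma FOP_app {A} (R : A -> A -> Prop) L1 L2 : ForallOrdPairs R L1 -> ForallOrdPairs R L2 ->
  (forall x y, In x L1 -> In y L2 -> R x y) -> ForallOrdPairs R (L1 ++ L2).
Proof. intros H1 H2 H3. induction H1 as [|a l Ha Hl IH]; simpl; auto.
  constructor. apply Forall_app; split; auto. apply Forall_forall; intros; apply H3; simpl; auto.
  apply IH. intros; apply H3; simpl; auto. Qed.

Lemma FOP_map {A} (R : A -> A -> Prop) f L : ForallOrdPairs R L ->
  (forall x y, R x y -> R (f x) (f y)) -> ForallOrdPairs R (map f L).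
Proof. intros H Hf. induction H as [|a l Ha Hl IH]; simpl; constructor; auto.
  apply Forall_map. eapply Forall_impl; [|exact Ha]. intros; apply Hf; auto. Qed.

Lemma Cst_app p s l u v a b : Cst p s l u a -> Cst p s l v b -> Cst p s l (u ++ v) (a + b).
Proof.
  intros [L1 [[HL1 HD1] Hu1]] [L2 [[HL2 HD2] Hu2]].
  exists (L1 ++ shiftL (length u) L2). split. split.
  - intros o Ho. apply in_app_iff in Ho as [Ho|Ho].
    + destruct (HL1 o Ho); split; auto. apply occ_app_l; auto.
    + unfold shiftL in Ho. apply in_map_iff in Ho as [o' [<- Ho']].
      destruct (HL2 o' Ho'); split; simpl; auto. apply occ_app_r; auto.
  - apply FOP_app; auto.
    + unfold shiftL. apply FOP_map; auto. intros x y Hxy k [Hk1 Hk2].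
      destruct (Nat.lt_ge_cases k (length u)).
      * rewrite cov_shift_lt in Hk1; auto; discriminate.
      * replace k with (length u + (k - length u)) in Hk1, Hk2 by lia.
        rewrite cov_shift in Hk1, Hk2. apply (Hxy (k - length u)); auto.
    + intros x y Hx Hy k [Hk1 Hk2]. unfold shiftL in Hy.
      apply in_map_iff in Hy as [y' [<- Hy']].
      destruct (HL1 x Hx) as [_ Hox]. pose proof (cov_lt _ _ _ _ _ Hox Hk1).
      rewrite cov_shift_lt in Hk2; auto; discriminate.
  - unfold uncovered in *. rewrite length_app, seq_app, filter_app, length_app.
    replace (seq (0 + length u) (length v)) with (map (Nat.add (length u)) (seq 0 (length v))) by (rewrite <- seq_shift_add; f_equal; lia). rewrite filter_map_len.
    rewrite (filter_ext_len _ (fun k => negb (existsb (fun o => coversb p s o k) L1))).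
    rewrite (filter_ext_len (fun x => _) (fun k => negb (existsb (fun o => coversb p s o k) L2)) (seq 0 (length v))).
    lia.
    + intros j Hj. rewrite existsb_app. unfold shiftL. rewrite existsb_map'.
      replace (existsb (fun o => coversb p s o (length u + j)) L1) with false.
      simpl. f_equal. apply existsb_ext'. intros o _. apply cov_shift.
      symmetry. apply Bool.not_true_iff_false. intros He.
      apply existsb_exists in He as [o [Ho Hc]]. destruct (HL1 o Ho) as [_ Hoc].
      pose proof (cov_lt _ _ _ _ _ Hoc Hc). lia.
    + intros k Hk. apply in_seq in Hk. rewrite existsb_app. unfold shiftL. rewrite existsb_map'.
      replace (existsb (fun x => coversb p s (length u + fst x, snd x) k) L2) with false.
      rewrite Bool.orb_false_r. auto.
      symmetry. apply Bool.not_true_iff_false. intros He.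
      apply existsb_exists in He as [o [Ho Hc]]. rewrite cov_shift_lt in Hc; [discriminate|lia].
Qed.


Lemma prefix_concat {A} (Us : list (list A)) Y y : Y ++ y = concat Us ->
  exists Mid P, (forall V, In V Mid -> In V Us) /\
    (P = [] \/ exists U b, In U Us /\ U = P ++ b) /\ Y = concat Mid ++ P.
Proof. revert Y y; induction Us as [|U Us IH]; intros Y y H; simpl in *.
  - apply app_eq_nil in H as [-> _]. exists [], []. repeat split; auto; try (intros V []).
  - apply app_eq_app in H as [l [[H1 H2]|[H1 H2]]].
    + symmetry in H2. destruct (IH _ _ H2) as [Mid [P [HM [HP HY]]]].
      exists (U :: Mid), P. repeat split.
      * intros V [<-|HV]; auto.
      * destruct HP as [->|[U' [b [HU' HE]]]]; auto. right; exists U', b; auto.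
      * subst; simpl; rewrite app_assoc; auto.
    + exists [], Y. repeat split. intros V []. right; exists U, l; auto.
Qed.

Lemma suffix_concat {A} (Us : list (list A)) x S : x ++ S = concat Us ->
  exists S' Mid, (S' = [] \/ exists U a, In U Us /\ U = a ++ S') /\
    (forall V, In V Mid -> In V Us) /\ S = S' ++ concat Mid.
Proof. revert x S; induction Us as [|U Us IH]; intros x S H; simpl in *.
  - apply app_eq_nil in H as [_ ->]. exists [], []. repeat split; auto; try (intros V []).
  - apply app_eq_app in H as [l [[H1 H2]|[H1 H2]]].
    + symmetry in H2. destruct (IH _ _ H2) as [S' [Mid [HS [HM HY]]]].
      exists S', Mid. repeat split; auto.
      * destruct HS as [->|[U' [b [HU' HE]]]]; auto. right; exists U', b; auto.
    + exists l, Us. repeat split; auto. right; exists U, x; auto.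
Qed.

Lemma factor_concat {A} (Us : list (list A)) x W y : x ++ W ++ y = concat Us ->
  (exists U a b, In U Us /\ U = a ++ W ++ b) \/
  (exists S Mid P, (S = [] \/ exists U a, In U Us /\ U = a ++ S) /\
    (forall V, In V Mid -> In V Us) /\
    (P = [] \/ exists U b, In U Us /\ U = P ++ b) /\ W = S ++ concat Mid ++ P).
Proof. revert x; induction Us as [|U Us IH]; intros x H; simpl in *.
  - apply app_eq_nil in H as [_ H]. apply app_eq_nil in H as [-> _].
    right. exists [], [], []. repeat split; auto; try (intros V []).
  - apply app_eq_app in H as [l [[H1 H2]|[H1 H2]]].
    + symmetry in H2. destruct (IH _ H2) as [[U' [a [b [HU HU']]]]|[S [Mid [P [HS [HM [HP HW]]]]]]].
      * left. exists U', a, b; auto.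
      * right. exists S, Mid, P. repeat split; auto.
        -- destruct HS as [->|[U' [b [HU' HE]]]]; auto. right; exists U', b; auto.
        -- destruct HP as [->|[U' [b [HU' HE]]]]; auto. right; exists U', b; auto.
    + apply app_eq_app in H2 as [l2 [[H3 H4]|[H3 H4]]].
      * symmetry in H4. destruct (prefix_concat _ _ _ H4) as [Mid [P [HM [HP HY]]]].
        right. exists l, Mid, P. repeat split; auto.
        -- right. exists U, x; auto.
        -- destruct HP as [->|[U' [b [HU' HE]]]]; auto. right; exists U', b; auto.
        -- subst; auto.
      * left. exists U, x, l2. subst; auto.
Qed.

Lemma last_cases {A} (l : list A) : l = [] \/ exists l' a, l = l' ++ [a].
Proof. induction l using rev_ind; auto. right; eauto. Qed.

Lemma repeat_pre (u v : list bool) n : u ++ v = repeat true n ->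
  u = repeat true (length u) /\ v = repeat true (length v) /\ length u + length v = n.
Proof. intros H. pose proof (f_equal (@length bool) H) as Hl.
  rewrite length_app, repeat_length in Hl. symmetry in H.
  apply repeat_eq_app in H as [H1 H2]. auto. Qed.

Definition Us p s m := map (fun i => B p s m ++ repeat true (s m i)) (seq 0 (p m)).

Lemma B_S p s m : 1 <= m -> B p s (S m) = concat (Us p s m).
Proof. intros Hm. destruct m; [lia|reflexivity]. Qed.

Lemma h_S p s m : 1 <= m -> h p s (S m) = p m * h p s m + ssum p s m.
Proof. intros Hm. destruct m; [lia|reflexivity]. Qed.

Lemma len_concat_units (X : list bool) (f : nat -> nat) lst :
  length (concat (map (fun i => X ++ repeat true (f i)) lst)) =
  length lst * length X + fold_right Nat.add 0 (map f lst).
Proof. induction lst; simpl; auto. rewrite length_app, length_app, repeat_length, IHlst. lia. Qed.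

Lemma length_B p s k : length (B p s k) = h p s k.
Proof. induction k as [|k IH]; auto. destruct k; auto.
  rewrite B_S, h_S by lia. unfold Us, ssum. rewrite len_concat_units, length_seq, IH. lia. Qed.

Lemma In_Us p s m U : In U (Us p s m) -> exists i, i < p m /\ U = B p s m ++ repeat true (s m i).
Proof. unfold Us. intros H. apply in_map_iff in H as [i [<- Hi]]. apply in_seq in Hi.
  exists i; split; auto; lia. Qed.

Lemma le_fold_max x lst : In x lst -> x <= fold_right Nat.max 0 lst.
Proof. induction lst; simpl; [intros []|]. intros [->|H]; [lia|]. specialize (IHlst H); lia. Qed.

Lemma s_le_tmax p s m i : i < p m -> s m i <= tmax p s m.
Proof. intros Hi. unfold tmax. apply le_fold_max. apply in_map. apply in_seq; lia. Qed.

Lemma h_double p s m : (forall n, 1 <= n -> 2 <= p n) -> 1 <= m -> 2 * h p s m <= h p s (S m).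
Proof. intros Hp Hm. rewrite h_S by auto. specialize (Hp m Hm). nia. Qed.

Lemma h_mono p s k n : (forall n, 1 <= n -> 2 <= p n) -> k <= n -> h p s k <= h p s n.
Proof. intros Hp Hk. induction Hk; auto. destruct m. simpl in *; lia.
  pose proof (h_double p s (S m) Hp ltac:(lia)). lia. Qed.


Definition Pg p s l D H w := exists c, Cst p s l w c /\ D * c <= D * H + length w.
Definition Qg p s l D w := exists c, Cst p s l w c /\ D * c <= length w.

Lemma Qg_app p s l D u v : Qg p s l D u -> Qg p s l D v -> Qg p s l D (u ++ v).
Proof. intros [a [Ha Ha']] [b [Hb Hb']]. exists (a + b); split.
  apply Cst_app; auto. rewrite length_app; nia. Qed.

Lemma QPg_app p s l D H u v : Qg p s l D u -> Pg p s l D H v -> Pg p s l D H (u ++ v).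
Proof. intros [a [Ha Ha']] [b [Hb Hb']]. exists (a + b); split.
  apply Cst_app; auto. rewrite length_app; nia. Qed.

Lemma Qg_nil p s l D : Qg p s l D [].
Proof. exists 0. split; [apply (Cst_triv p s l [])|simpl; lia]. Qed.

Lemma Qg_Pg p s l D H w : Qg p s l D w -> Pg p s l D H w.
Proof. intros [a [Ha Ha']]. exists a; split; auto; nia. Qed.

Lemma Pg_small p s l D H w : length w <= H -> Pg p s l D H w.
Proof. intros Hw. exists (length w). split. apply Cst_triv. nia. Qed.

Lemma Qg_Brep p s l D k r : l <= k -> D * r <= h p s k ->
  Qg p s l D (B p s k ++ repeat true r).
Proof. intros Hk Hr. exists (0 + r). split. apply Cst_app. apply Cst_B; auto.
  pose proof (Cst_triv p s l (repeat true r)) as X. rewrite repeat_length in X; auto.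
  rewrite length_app, repeat_length, length_B. lia. Qed.

Lemma Qg_repB p s l D k r : l <= k -> D * r <= h p s k ->
  Qg p s l D (repeat true r ++ B p s k).
Proof. intros Hk Hr. exists (r + 0). split. apply Cst_app.
  pose proof (Cst_triv p s l (repeat true r)) as X. rewrite repeat_length in X; auto.
  apply Cst_B; auto.
  rewrite length_app, repeat_length, length_B. lia. Qed.

Lemma Qg_B p s l D k : l <= k -> Qg p s l D (B p s k).
Proof. intros Hk. exists 0. split. apply Cst_B; auto. lia. Qed.


Definition Hyps p s l D n0 :=
  (forall n, 1 <= n -> 2 <= p n) /\ 1 <= n0 /\ l <= n0 /\ 1 <= D /\
  (forall k, n0 <= k -> 4 * D * tmax p s k <= h p s k).

Lemma Qg_unit p s l D n0 k U : Hyps p s l D n0 -> n0 <= k -> In U (Us p s k) -> Qg p s l D U.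
Proof. intros (Hp & H1 & Hl & HD & HT) Hk HU. apply In_Us in HU as [i [Hi ->]].
  apply Qg_Brep. lia. pose proof (s_le_tmax p s k i Hi). specialize (HT k Hk). nia. Qed.

Lemma Qg_concat p s l D n0 k Mid : Hyps p s l D n0 -> n0 <= k ->
  (forall V, In V Mid -> In V (Us p s k)) -> Qg p s l D (concat Mid).
Proof. intros Hy Hk. induction Mid as [|V Mid IH]; intros HM; simpl.
  apply Qg_nil. apply Qg_app. eapply Qg_unit; eauto. apply HM; left; auto.
  apply IH; intros; apply HM; right; auto. Qed.

Lemma PL p s l D n0 : Hyps p s l D n0 -> forall k Y y, Y ++ y = B p s k ->
  Pg p s l D (h p s n0) Y.
Proof. intros Hy. pose proof Hy as (Hp & H1 & Hl & HD & HT).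
  induction k as [|k IH]; intros Y y HY.
  - apply Pg_small. pose proof (f_equal (@length bool) HY) as E.
    rewrite length_app, length_B in E. pose proof (h_mono p s 0 n0 Hp ltac:(lia)). lia.
  - destruct (le_lt_dec (S k) n0) as [Hs|Hs].
    + apply Pg_small. pose proof (f_equal (@length bool) HY) as E.
      rewrite length_app, length_B in E. pose proof (h_mono p s (S k) n0 Hp Hs). lia.
    + rewrite B_S in HY by lia. apply prefix_concat in HY as [Mid [P [HM [HP ->]]]].
      apply QPg_app. apply (Qg_concat p s l D n0 k); auto; lia.
      destruct HP as [->|[U [b [HU HE]]]]. apply Qg_Pg, Qg_nil.
      pose proof (In_Us _ _ _ _ HU) as [i [Hi HU']]. rewrite HU' in HE.
      symmetry in HE. apply app_eq_app in HE as [l' [[E1 E2]|[E1 E2]]].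
      * symmetry in E2. apply repeat_pre in E2 as [E2 [_ E3]]. subst P.
        rewrite E2. apply Qg_Pg, Qg_Brep. lia.
        pose proof (s_le_tmax p s k i Hi). specialize (HT k ltac:(lia)). nia.
      * apply IH with l'. auto.
Qed.


Lemma Pg_join p s l D H k u r v : l <= k -> Pg p s l D H u -> Qg p s l D v -> D * r <= h p s k ->
  Pg p s l D H (u ++ repeat true r ++ v ++ B p s k).
Proof. intros Hk [a [Ha Ha']] [b [Hb Hb']] Hr. exists (a + (r + (b + 0))). split.
  apply Cst_app; auto. apply Cst_app.
  pose proof (Cst_triv p s l (repeat true r)) as X. rewrite repeat_length in X; auto.
  apply Cst_app; auto. apply Cst_B; auto.
  rewrite !length_app, repeat_length, length_B. nia. Qed.

Definition SLstmt p s l D n0 k := forall x S, x ++ S = B p s k ->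
  exists S0 r, S = S0 ++ repeat true r /\ Pg p s l D (h p s n0) S0 /\ 2 * D * r <= h p s k.

Lemma unitsuf p s l D n0 k S' : Hyps p s l D n0 -> n0 <= k -> SLstmt p s l D n0 k ->
  (S' = [] \/ exists U a, In U (Us p s k) /\ U = a ++ S') ->
  exists S0 r, S' = S0 ++ repeat true r /\ Pg p s l D (h p s n0) S0 /\ 4 * D * r <= 3 * h p s k.
Proof. intros Hy Hk HSL HS. pose proof Hy as (Hp & H1 & Hl & HD & HT).
  destruct HS as [->|[U [a [HU HE]]]].
  - exists [], 0. repeat split; auto. apply Qg_Pg, Qg_nil. lia.
  - pose proof (In_Us _ _ _ _ HU) as [i [Hi HU']]. rewrite HU' in HE.
    pose proof (s_le_tmax p s k i Hi). specialize (HT k Hk).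
    apply app_eq_app in HE as [l' [[E1 E2]|[E1 E2]]].
    + symmetry in E1. destruct (HSL _ _ E1) as [S0 [r [-> [HP Hr]]]].
      exists S0, (r + s k i). repeat split; auto. rewrite repeat_app, E2, <- app_assoc; auto. nia.
    + symmetry in E2. apply repeat_pre in E2 as [_ [E2 E3]].
      exists [], (length S'). repeat split; auto. apply Qg_Pg, Qg_nil. nia.
Qed.

Lemma unitpre p s l D n0 k P : Hyps p s l D n0 -> n0 <= k ->
  (P = [] \/ exists U b, In U (Us p s k) /\ U = P ++ b) -> Pg p s l D (h p s n0) P.
Proof. intros Hy Hk HP. pose proof Hy as (Hp & H1 & Hl & HD & HT).
  destruct HP as [->|[U [b [HU HE]]]]. apply Qg_Pg, Qg_nil.
  pose proof (In_Us _ _ _ _ HU) as [i [Hi HU']]. rewrite HU' in HE.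
  symmetry in HE. apply app_eq_app in HE as [l' [[E1 E2]|[E1 E2]]].
  * symmetry in E2. apply repeat_pre in E2 as [E2 [_ E3]]. subst P.
    rewrite E2. apply Qg_Pg, Qg_Brep. lia.
    pose proof (s_le_tmax p s k i Hi). specialize (HT k ltac:(lia)). nia.
  * apply (PL p s l D n0 Hy k P l'). auto.
Qed.

Lemma SL p s l D n0 : Hyps p s l D n0 -> forall k, SLstmt p s l D n0 k.
Proof. intros Hy. pose proof Hy as (Hp & H1 & Hl & HD & HT).
  induction k as [|k IH]; intros x Sx HS.
  - exists Sx, 0. rewrite app_nil_r. repeat split; [|lia]. apply Pg_small.
    pose proof (f_equal (@length bool) HS) as E.
    rewrite length_app, length_B in E. pose proof (h_mono p s 0 n0 Hp ltac:(lia)). lia.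
  - destruct (le_lt_dec (S k) n0) as [Hs|Hs].
    + exists Sx, 0. rewrite app_nil_r. repeat split; [|lia]. apply Pg_small.
      pose proof (f_equal (@length bool) HS) as E.
      rewrite length_app, length_B in E. pose proof (h_mono p s (S k) n0 Hp Hs). lia.
    + pose proof (h_double p s k Hp ltac:(lia)) as Hd.
      rewrite B_S in HS by lia. apply suffix_concat in HS as [S' [Mid [HS' [HM ->]]]].
      destruct (unitsuf p s l D n0 k S' Hy ltac:(lia) IH HS') as [S0 [r [-> [HP Hr]]]].
      destruct (last_cases Mid) as [->|[Mid' [U ->]]].
      * exists S0, r. cbn [concat]. rewrite !app_nil_r. repeat split; auto. nia.
      * assert (HU : In U (Us p s k)) by (apply HM, in_app_iff; right; left; auto).
        pose proof (In_Us _ _ _ _ HU) as [i [Hi HU']].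
        pose proof (s_le_tmax p s k i Hi). specialize (HT k ltac:(lia)).
        exists (S0 ++ repeat true r ++ concat Mid' ++ B p s k), (s k i).
        repeat split.
        -- rewrite concat_app, HU'. simpl. rewrite !app_nil_r, <- !app_assoc. auto.
        -- apply Pg_join; auto. lia. apply (Qg_concat p s l D n0 k); auto. lia.
           intros V HV; apply HM, in_app_iff; left; auto. nia.
        -- nia.
Qed.

Lemma FL p s l D n0 : Hyps p s l D n0 -> forall k x W y, x ++ W ++ y = B p s k ->
  exists A t C, W = A ++ repeat true t ++ C /\ Pg p s l D (h p s n0) A /\ Pg p s l D (h p s n0) C.
Proof. intros Hy. pose proof Hy as (Hp & H1 & Hl & HD & HT).
  intros k. induction k as [|k IH]; intros x W y HW.
  - exists W, 0, []. rewrite app_nil_r. repeat split. apply Pg_small.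
    pose proof (f_equal (@length bool) HW) as E.
    rewrite !length_app, length_B in E. pose proof (h_mono p s 0 n0 Hp ltac:(lia)). lia.
    apply Qg_Pg, Qg_nil.
  - destruct (le_lt_dec (S k) n0) as [Hs|Hs].
    + exists W, 0, []. rewrite app_nil_r. repeat split. apply Pg_small.
      pose proof (f_equal (@length bool) HW) as E.
      rewrite !length_app, length_B in E. pose proof (h_mono p s (S k) n0 Hp Hs). lia.
      apply Qg_Pg, Qg_nil.
    + rewrite B_S in HW by lia.
      pose proof (SL p s l D n0 Hy k) as HSL.
      apply factor_concat in HW as [[U [a [b [HU HE]]]] | [S' [Mid [P [HS [HM [HP ->]]]]]]].
      * pose proof (In_Us _ _ _ _ HU) as [i [Hi HU']]. rewrite HU' in HE.
        rewrite app_assoc in HE. apply app_eq_app in HE as [l' [[E1 E2]|[E1 E2]]].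
        -- apply (IH a W l'). rewrite app_assoc; auto.
        -- symmetry in E2. apply repeat_pre in E2 as [E2 [_ E3]].
           apply app_eq_app in E1 as [l2 [[F1 F2]|[F1 F2]]].
           ++ rewrite F2 in E2. apply repeat_pre in E2 as [_ [E4 _]].
              exists [], (length W), []. rewrite app_nil_r. repeat split; auto;
              apply Qg_Pg, Qg_nil.
           ++ symmetry in F1. destruct (HSL _ _ F1) as [S0 [r [-> [HP Hr]]]].
              exists S0, (r + length l'), []. repeat split; auto.
              rewrite F2, repeat_app, app_nil_r, <- E2, <- !app_assoc. auto.
              apply Qg_Pg, Qg_nil.
      * destruct (unitsuf p s l D n0 k S' Hy ltac:(lia) HSL HS) as [S0 [r [-> [HP0 Hr]]]].
        exists S0, r, (concat Mid ++ P). repeat split; auto.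
        rewrite <- !app_assoc; auto.
        apply QPg_app. apply (Qg_concat p s l D n0 k); auto; lia.
        apply (unitpre p s l D n0 k); auto; lia.
Qed.

Close Scope nat_scope.
Open Scope R_scope.

Lemma exists_nat_gt (x : R) : exists n : nat, x < INR n.
Proof. destruct (archimed x) as [H _]. exists (Z.to_nat (up x)).
  destruct (Z_le_gt_dec 0 (up x)) as [Hz|Hz].
  - rewrite INR_IZR_INZ, Z2Nat.id by lia; lra.
  - replace (Z.to_nat (up x)) with 0%nat by lia. simpl. assert (Hz2 : (up x < 0)%Z) by lia; apply IZR_lt in Hz2. lra. Qed.

Theorem mainTheorem7 (p : nat -> nat) (s : nat -> nat -> nat)
  (Hp : forall n : nat, (1 <= n)%nat -> (2 <= p n)%nat)
  (Hsum : exists lim : R,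
     infinite_sum (fun k => INR (ssum p s (S k)) / INR (h p s (S (S k)))) lim)
  (Hreas : reasonable p s)
  (eps : R) (Heps : 0 < eps) (l : nat) (Hl : (1 <= l)%nat) :
  exists N0 : nat, forall N : nat, (N0 <= N)%nat ->
    forall omega : Z -> bool, InOmega p s omega ->
      exists (A C : list bool) (t : nat) (LA LC : list (nat * nat)),
        window omega 1%Z N = A ++ repeat true t ++ C /\
        good_family p s l A LA /\ good_family p s l C LC /\
        INR (uncovered p s A LA + uncovered p s C LC) <= eps * INR N.
Proof.
  destruct (exists_nat_gt (2 / eps)) as [d Hd].
  set (D := S d).
  assert (HD : 2 < INR D * eps).
  { unfold D. rewrite S_INR. apply (Rmult_lt_compat_r eps) in Hd; auto.
    unfold Rdiv in Hd. rewrite Rmult_assoc, Rinv_l in Hd by lra.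
    pose proof (pos_INR d). nra. }
  assert (HDpos : 0 < INR D) by (unfold D; rewrite S_INR; pose proof (pos_INR d); lra).
  destruct (Hreas (/ (4 * INR D))) as [n1 Hn1].
  { apply Rinv_0_lt_compat; lra. }
  set (n0 := Nat.max (Nat.max n1 l) 1).
  assert (Hy : Hyps p s l D n0).
  { unfold Hyps. refine (conj Hp (conj _ (conj _ (conj _ _)))); [unfold n0; lia|unfold n0; lia|unfold D; lia|].
    intros k Hk. apply INR_le. rewrite !mult_INR. specialize (Hn1 k ltac:(unfold n0 in Hk; lia)).
    replace (INR 4) with 4 by (simpl; lra).
    apply (Rmult_le_compat_l (4 * INR D)) in Hn1; [|lra].
    rewrite <- Rmult_assoc, Rinv_r in Hn1 by lra. lra. }
  set (H := h p s n0).
  destruct (exists_nat_gt (4 * INR H / eps)) as [N0 HN0].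
  exists N0. intros N HN omega Hom.
  destruct (Hom 1%Z N) as [m [Hm [x [y Hxy]]]].
  symmetry in Hxy.
  destruct (FL p s l D n0 Hy m x _ y Hxy) as [A [t [C [HW [[cA [[LA [HLA HuA]] HcA]] [cC [[LC [HLC HuC]] HcC]]]]]]].
  exists A, C, t, LA, LC. split; auto. split; auto. split; auto.
  assert (Hlen : length (window omega 1 N) = N) by (unfold window; rewrite length_map, length_seq; auto).
  rewrite HW, !length_app in Hlen.
  assert (Hnat : (D * (uncovered p s A LA + uncovered p s C LC) <= 2 * D * H + N)%nat).
  { fold H in HcA, HcC. nia. }
  apply le_INR in Hnat. rewrite !mult_INR, !plus_INR, !mult_INR in Hnat.
  rewrite plus_INR. replace (INR 2) with 2 in Hnat by (simpl; lra).
  set (u := INR (uncovered p s A LA) + INR (uncovered p s C LC)) in *.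
  assert (HNN : INR N0 <= INR N) by (apply le_INR; auto).
  assert (H4 : 4 * INR H < eps * INR N).
  { apply (Rmult_lt_compat_r eps) in HN0; auto. unfold Rdiv in HN0.
    rewrite Rmult_assoc, Rinv_l in HN0 by lra. nra. }
  pose proof (pos_INR N). pose proof (pos_INR H).
  apply (Rmult_le_reg_l (INR D)); auto. nra.
Qed.
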